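(* Let $V+Z\in\mathfrak v\oplus\mathfrak z$ with $Z=Z_c$ satisfy the genericity condition ($|c|>|c_k|>0$ and $V_{c_k}\neq0$, $V_{|c|}\neq0$, $V_0\neq0$). Let $\gamma:\mathbb R\to N$ (resp. $N'$) be a geodesic with $\dot\gamma(0)=((v,z),V+Z)$, let $\tau>0$, and assume $\dot\gamma(\tau)=(\gamma(\tau),V+Z)$. Write $V_0=\beta Y(Z)$, $V_\perp:=V_{c_k}+V_{|c|}=\sum_{m=1}^4\alpha_mE_m(Z)$ in the case of $N$ (resp. $=\sum_{m=1}^4\alpha'_mE'_m(Z)$ in the case of $N'$), and $v=x_iX_i+x_jX_j+y_iY_i+y_jY_j+y_kY_k$. Then $\tau c_k\in2\pi\mathbb Z$, $\tau|c|\in2\pi\mathbb Z$, and the translational element $a:=\gamma(\tau)\gamma(0)^{-1}$ equals, in $N$, $$\Bigl(\tau V_0,\ \tau\bigl(1+\tfrac{|V_\perp|^2}{2|c|^2}\bigr)Z_c+\tau\beta\bigl(\alpha_2-\tfrac{c_k}{c_i^2+c_j^2}(x_ic_i+x_jc_j)\bigr)(-c_jZ_i+c_iZ_j)+\tau\Bigl(-\tfrac{|V_{c_k}|^2}{2c_k|c|^2}+\beta\bigl(\alpha_4-\tfrac{1}{c_i^2+c_j^2}(x_ic_j-x_jc_i)\bigr)\Bigr)\bigl(c_k(c_iZ_i+c_jZ_j)-(c_i^2+c_j^2)Z_k\bigr)\Bigr),$$ and, in $N'$, $$\Bigl(\tau V_0,\ \tau\bigl(1+\tfrac{|V_\pe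rp|^2}{2|c|^2}\bigr)Z_c+\tau\beta\bigl(-|c|\alpha'_3+y_k-\tfrac{c_k}{c_i^2+c_j^2}(y_ic_i+y_jc_j)\bigr)(-c_jZ_i+c_iZ_j)+\tau\Bigl(-\tfrac{|V_{c_k}|^2}{2c_k|c|^2}+\beta\bigl(\alpha'_4-\tfrac{1}{c_i^2+c_j^2}(y_ic_j-y_jc_i)\bigr)\Bigr)\bigl(c_k(c_iZ_i+c_jZ_j)-(c_i^2+c_j^2)Z_k\bigr)\Bigr).$$
   Context: $\mathfrak v$ has orthonormal basis $X_i,X_j,Y_i,Y_j,Y_k$, $\mathfrak z$ orthonormal basis $Z_i,Z_j,Z_k$; on the orthogonal sum $\mathfrak v\oplus\mathfrak z$ two two-step nilpotent brackets ($\mathfrak z$ central, $[\mathfrak v,\mathfrak v]\subseteq\mathfrak z$) are given: $[\,,]$ with only nonzero basis brackets (up to antisymmetry) $[X_i,Y_j]=Z_k$, $[X_i,Y_k]=-Z_j$, $[X_j,Y_i]=-Z_k$, $[X_j,Y_k]=Z_i$; and $[\,,]'$ with $[X_i,X_j]'=Z_k$, $[Y_i,Y_j]'=Z_k$, $[Y_j,Y_k]'=Z_i$, $[Y_k,Y_i]'=Z_j$. $j,j':\mathfrak z\to\mathfrak{so}(\mathfrak v)$ are defined by $\langle j(Z)X,Y\rangle=\langle Z,[X,Y]\rangle$ and similarly for $j'$. $N,N'$ are the corresponding simply connected Lie groups with left invariant metrics $g,g'$ given by the inner product. Elements are written $(v,z):=\exp(v+z)$, with $(v,z)(\bar v,\bar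 z)=(v+\bar v,z+\bar z+\tfrac12[v,\bar v])$ (resp. $[\,,]'$); tangent vectors are written $(p,A)$ with $A=L_{p*}^{-1}X\in\mathfrak v\oplus\mathfrak z$. For $Z=Z_c=c_iZ_i+c_jZ_j+c_kZ_k$ and $V\in\mathfrak v$, $V_\lambda$ denotes the component of $V$ in the $(-\lambda^2)$-eigenspace of $j(Z)^2$ (resp. $j'(Z)^2$), so $V=V_{c_k}+V_{|c|}+V_0$ when $|c|>|c_k|>0$. Set $Y(Z)=c_iY_i+c_jY_j+c_kY_k$; $E_1(Z)=c_iX_i+c_jX_j$, $E_2(Z)=-c_jY_i+c_iY_j$, $E_3(Z)=|c|(c_jX_i-c_iX_j)$, $E_4(Z)=c_k(c_iY_i+c_jY_j)-(c_i^2+c_j^2)Y_k$; $E'_1(Z)=X_i$, $E'_2(Z)=X_j$, $E'_3(Z)=|c|(c_jY_i-c_iY_j)$, $E'_4(Z)=c_k(c_iY_i+c_jY_j)-(c_i^2+c_j^2)Y_k$. *)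

(* Defs.v *)
From HB Require Import structures.
From mathcomp Require Import all_boot all_order all_algebra.
From mathcomp Require Import all_classical all_reals all_analysis.
Set Implicit Arguments. Unset Strict Implicit. Unset Printing Implicit Defensive.
Import Order.TTheory GRing.Theory Num.Theory.
Local Open Scope ring_scope.

Section Defs.
Variable R : realType.

Definition Xi : 'rV[R]_5 := delta_mx 0 (inord 0).
Definition Xj : 'rV[R]_5 := delta_mx 0 (inord 1).
Definition Yi : 'rV[R]_5 := delta_mx 0 (inord 2).
Definition Yj : 'rV[R]_5 := delta_mx 0 (inord 3).
Definition Yk : 'rV[R]_5 := delta_mx 0 (inord 4).
Definition Zi : 'rV[R]_3 := delta_mx 0 (inord 0).
Definition Zj : 'rV[R]_3 := delta_mx 0 (inord 1).
Definition Zk : 'rV[R]_3 := delta_mx 0 (inord 2).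

(* standard inner product on row vectors (the basis above is orthonormal) *)
Definition dot n (a b : 'rV[R]_n) : R := \sum_(i < n) a 0 i * b 0 i.

Definition bbN (a b : 'I_5) : 'rV[R]_3 :=
  match val a, val b with
  | 0, 3 => Zk | 3, 0 => - Zk     (* [X_i,Y_j] = Z_k *)
  | 0, 4 => - Zj | 4, 0 => Zj     (* [X_i,Y_k] = -Z_j *)
  | 1, 2 => - Zk | 2, 1 => Zk     (* [X_j,Y_i] = -Z_k *)
  | 1, 4 => Zi | 4, 1 => - Zi     (* [X_j,Y_k] = Z_i *)
  | _, _ => 0
  end.

Definition bbN' (a b : 'I_5) : 'rV[R]_3 :=
  match val a, val b with
  | 0, 1 => Zk | 1, 0 => - Zk     (* [X_i,X_j]' = Z_k *)
  | 2, 3 => Zk | 3, 2 => - Zk     (* [Y_i,Y_j]' = Z_k *)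
  | 3, 4 => Zi | 4, 3 => - Zi     (* [Y_j,Y_k]' = Z_i *)
  | 4, 2 => Zj | 2, 4 => - Zj     (* [Y_k,Y_i]' = Z_j *)
  | _, _ => 0
  end.

Definition brOf (bb : 'I_5 -> 'I_5 -> 'rV[R]_3) (v w : 'rV[R]_5) : 'rV[R]_3 :=
  \sum_(a < 5) \sum_(b < 5) (v 0 a * w 0 b) *: bb a b.

Definition brN := brOf bbN.
Definition brN' := brOf bbN'.

Definition jmap (br : 'rV[R]_5 -> 'rV[R]_5 -> 'rV[R]_3) (Z : 'rV[R]_3)
  (x : 'rV[R]_5) : 'rV[R]_5 := \row_(w < 5) dot Z (br x (delta_mx 0 w)).

Definition nalg := ('rV[R]_5 * 'rV[R]_3)%type.
Definition nadd (X Y : nalg) : nalg := (X.1 + Y.1, X.2 + Y.2).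
Definition lie br (X Y : nalg) : nalg := (0, br X.1 Y.1).
Definition ip (X Y : nalg) : R := dot X.1 Y.1 + dot X.2 Y.2.
Definition koszul br (X Y W : nalg) : R :=
  2^-1 * (ip (lie br X Y) W - ip (lie br Y W) X + ip (lie br W X) Y).
Definition nabla br (X Y : nalg) : nalg :=
  (\row_(u < 5) koszul br X Y (delta_mx 0 u, 0),
   \row_(r < 3) koszul br X Y (0, delta_mx 0 r)).

Definition gmul br (p q : nalg) : nalg := (p.1 + q.1, p.2 + q.2 + 2^-1 *: br p.1 q.1).
Definition ginv (p : nalg) : nalg := (- p.1, - p.2).

(* curves in exponential coordinates *)
Definition coordf n (f : R -> 'rV[R]_n) (u : 'I_n) : R -> R := fun s => f s 0 u.
Definition C1curve n (f : R -> 'rV[R]_n) : Prop :=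
  forall (u : 'I_n) (t : R), derivable (coordf f u) t 1.
Definition dcurve n (f : R -> 'rV[R]_n) (t : R) : 'rV[R]_n :=
  \row_(u < n) derive1 (coordf f u) t.

(* left-trivialized velocity A(t) = L_{gamma(t)*}^{-1} gamma'(t) *)
Definition ltv br (gv : R -> 'rV[R]_5) (gz : R -> 'rV[R]_3) (t : R) : nalg :=
  (dcurve gv t, dcurve gz t - 2^-1 *: br (gv t) (dcurve gv t)).

(* geodesic of the left-invariant metric: nabla_{gamma'} gamma' = 0, i.e.
   A'(t) + nabla_{A(t)} A(t) = 0 in the left-invariant orthonormal frame *)
Definition geodesic br (gv : R -> 'rV[R]_5) (gz : R -> 'rV[R]_3) : Prop :=
  [/\ C1curve gv, C1curve gz,
      C1curve (fun t => (ltv br gv gz t).1),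
      C1curve (fun t => (ltv br gv gz t).2) &
      forall t, nadd (dcurve (fun s => (ltv br gv gz s).1) t,
                      dcurve (fun s => (ltv br gv gz s).2) t)
                     (nabla br (ltv br gv gz t) (ltv br gv gz t)) = (0, 0)].

Definition Zc (ci cj ck : R) : 'rV[R]_3 := ci *: Zi + cj *: Zj + ck *: Zk.
Definition cnorm (ci cj ck : R) : R := Num.sqrt (ci ^+ 2 + cj ^+ 2 + ck ^+ 2).
Definition YZ (ci cj ck : R) : 'rV[R]_5 := ci *: Yi + cj *: Yj + ck *: Yk.
Definition E1 (ci cj ck : R) : 'rV[R]_5 := ci *: Xi + cj *: Xj.
Definition E2 (ci cj ck : R) : 'rV[R]_5 := - cj *: Yi + ci *: Yj.
Definition E3 (ci cj ck : R) : 'rV[R]_5 := cnorm ci cj ck *: (cj *: Xi - ci *: Xj).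
Definition E4 (ci cj ck : R) : 'rV[R]_5 :=
  ck *: (ci *: Yi + cj *: Yj) - (ci ^+ 2 + cj ^+ 2) *: Yk.
Definition E1' (ci cj ck : R) : 'rV[R]_5 := Xi.
Definition E2' (ci cj ck : R) : 'rV[R]_5 := Xj.
Definition E3' (ci cj ck : R) : 'rV[R]_5 := cnorm ci cj ck *: (cj *: Yi - ci *: Yj).
Definition E4' (ci cj ck : R) : 'rV[R]_5 :=
  ck *: (ci *: Yi + cj *: Yj) - (ci ^+ 2 + cj ^+ 2) *: Yk.

(* genericity: |c| > |c_k| > 0 and V = V_{c_k} + V_{|c|} + V_0 with V_lam in
   the (-lam^2)-eigenspace of j(Z)^2, all three nonzero *)
Definition eigcomp br (Z : 'rV[R]_3) (lam : R) (W : 'rV[R]_5) : Prop :=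
  jmap br Z (jmap br Z W) = - (lam ^+ 2) *: W.

End Defs.
Arguments Xi {R}. Arguments Xj {R}. Arguments Yi {R}. Arguments Yj {R}.
Arguments Yk {R}. Arguments Zi {R}. Arguments Zj {R}. Arguments Zk {R}.
Arguments brN {R}. Arguments brN' {R}. Arguments bbN {R}. Arguments bbN' {R}.

(* Main.v *)
Require Import Defs.
From HB Require Import structures.
From mathcomp Require Import all_boot all_order all_algebra.
From mathcomp Require Import all_classical all_reals all_analysis.
From mathcomp Require Import ring lra.
Import Order.TTheory GRing.Theory Num.Theory.
Local Open Scope ring_scope.

Definition DD {R : realType} (t : R) (f : R -> R) (d : R) := is_derive t 1 f d.
Section DT.
Variable R : realType.
Implicit Types (f g : R -> R) (t df dg c : R).

Lemma dAdd f g t df dg : DD t f df -> DD t g dg ->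
  DD t (fun s => f s + g s) (df + dg).
Proof. rewrite /DD => ? ?; exact: is_deriveD. Qed.
Lemma dOpp f t df : DD t f df -> DD t (fun s => - f s) (- df).
Proof. rewrite /DD => ?; exact: is_deriveN. Qed.
Lemma dMul f g t df dg : DD t f df -> DD t g dg ->
  DD t (fun s => f s * g s) (f t * dg + g t * df).
Proof. rewrite /DD => ? ?; have := @is_deriveM _ _ f g t 1 df dg _ _; exact. Qed.
Lemma dCst t c : DD t (fun _ : R => c) 0.
Proof. exact: is_derive_cst. Qed.
Lemma dId t : DD t (fun s : R => s) 1.
Proof. exact: is_derive_id. Qed.
Lemma dCos f t df : DD t f df -> DD t (fun s => cos (f s)) (- sin (f t) * df).
Proof. rewrite /DD => H; have := @is_derive1_comp R cos f t _ df (is_derive_cos (f t)) H; exact. Qed.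
Lemma dSin f t df : DD t f df -> DD t (fun s => sin (f s)) (cos (f t) * df).
Proof. rewrite /DD => H; have := @is_derive1_comp R sin f t _ df (is_derive_sin (f t)) H; exact. Qed.
Lemma dEq f t df df' : DD t f df -> df = df' -> DD t f df'.
Proof. by move=> ? <-. Qed.
Lemma dExt f g t df : (forall s, f s = g s) -> DD t g df -> DD t f df.
Proof. by move=> e; rewrite (_ : f = g) //; apply: funext. Qed.
Lemma cst_of f (x y : R) : (forall t, DD t f 0) -> f x = f y.
Proof. exact: is_derive_0_is_cst. Qed.
End DT.

Ltac dstep := first
  [ apply: dCst
  | apply: dId
  | apply: dAdd
  | apply: dOpp
  | apply: dMul
  | apply: dCos
  | apply: dSin ].
Ltac dtac := repeat dstep.
Ltac dtacH tac := repeat (first [dstep | tac]).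
Lemma cos_int_period (R : realType) (x : R) (k : int) :
  cos (x - 2 * pi * k%:~R) = cos x.
Proof.
have P := periodicn (@cosD2pi R).
have E : (2 : R) * pi = pi *+ 2 by rewrite mulr_natl.
case: k => m.
- rewrite E (_ : (Posz m)%:~R = m%:R :> R) // mulr_natr.
  by rewrite -(P m (x - _)) subrK.
- rewrite NegzE mulrN opprK E mulr_natr.
  by rewrite P.
Qed.
Lemma cos1_int (R : realType) (x : R) :
  cos x = 1 -> exists n : int, x = 2 * pi * n%:~R.
Proof.
move=> cx.
have T0 : (0 : R) < 2 * pi by rewrite mulr_gt0 ?pi_gt0.
exists (Num.floor (x / (2 * pi))).
set n := Num.floor _.
set y := x - 2 * pi * n%:~R.
have cy : cos y = 1 by rewrite /y cos_int_period.
have y0 : 0 <= y.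
  have := Num.Theory.floor_le (x / (2 * pi)); rewrite -/n ler_pdivlMr // /y => h; lra.
have yT : y < 2 * pi.
  have := floorD1_gt (x / (2 * pi)); rewrite -/n ltr_pdivrMr // intrD mulrDl mul1r /y => h; lra.
suff : y = 0 by move=> /eqP; rewrite subr_eq0 => /eqP.
have c1 : cos (0 : R) = 1 by rewrite cos0.
case: (lerP y pi) => ypi.
- apply: cos_inj; rewrite ?in_itv /= ?y0 ?ypi ?lexx ?pi_ge0 //; by rewrite cy c1.
- exfalso.
  have : 2 * pi - y = 0.
    apply: cos_inj; rewrite ?in_itv /= ?lexx ?pi_ge0 //.
    + apply/andP; split; lra.
    + rewrite c1 -cosN opprB; have := @cos_int_period R y 1.
      by rewrite mulr1 => ->.
  lra.
Qed.
Lemma rot_period (R : realType) (f g : R -> R) (w tau : R) :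
  (forall t : R, DD t f (- w * g t)) -> (forall t : R, DD t g (w * f t)) ->
  f tau = f 0 -> g tau = g 0 -> f 0 ^+ 2 + g 0 ^+ 2 != 0 ->
  cos (w * tau) = 1.
Proof.
move=> Hf Hg ft gt nz.
have H1 := @cst_of R (fun s => cos (w * s) * f s + sin (w * s) * g s) tau 0.
have H2 := @cst_of R (fun s => - sin (w * s) * f s + cos (w * s) * g s) tau 0.
have /= {}H1 : cos (w * tau) * f tau + sin (w * tau) * g tau = cos (w * 0) * f 0 + sin (w * 0) * g 0.
  apply: H1 => t; apply: dEq; first by dtac; [apply: Hf | apply: Hg].
  rewrite /=; ring.
have /= {}H2 : - sin (w * tau) * f tau + cos (w * tau) * g tau = - sin (w * 0) * f 0 + cos (w * 0) * g 0.
  apply: H2 => t; apply: dEq; first by dtac; [apply: Hf | apply: Hg].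
  rewrite /=; ring.
move: H1 H2; rewrite ft gt mulr0 cos0 sin0 => H1 H2.
have : (cos (w * tau) - 1) * (f 0 ^+ 2 + g 0 ^+ 2) = 0.
  rewrite (_ : _ * _ = f 0 * (cos (w * tau) * f 0 + sin (w * tau) * g 0 - (1 * f 0 + 0 * g 0))
     + g 0 * (- sin (w * tau) * f 0 + cos (w * tau) * g 0 - (- 0 * f 0 + 1 * g 0))); last by ring.
  by rewrite H1 H2 !subrr !mulr0 addr0.
move/eqP; rewrite mulf_eq0 (negbTE nz) orbF subr_eq0 => /eqP //.
Qed.
Lemma cancel_lin (R : realType) (a b X : R) : a * X = b * X -> a != b -> X = 0.
Proof.
move=> h nab; apply/eqP; move: h => /eqP; rewrite -subr_eq0 -mulrBl mulf_eq0 subr_eq0 (negbTE nab) //.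
Qed.

Section V5.
Context {R : realType}.

Definition v5 (a b c d e : R) : 'rV[R]_5 := \row_(u < 5) nth 0 [:: a; b; c; d; e] u.
Definition v3 (a b c : R) : 'rV[R]_3 := \row_(u < 3) nth 0 [:: a; b; c] u.
Definition e5 (x : 'rV[R]_5) (k : nat) : R := x 0 (@inord 4 k).
Definition e3 (x : 'rV[R]_3) (k : nat) : R := x 0 (@inord 2 k).

Lemma v5E x : x = v5 (e5 x 0) (e5 x 1) (e5 x 2) (e5 x 3) (e5 x 4).
Proof.
apply/rowP => u; rewrite mxE; case: u => [[|[|[|[|[|m]]]]] Hu]; last by exfalso; move: Hu; rewrite !ltnS ltn0.
all: rewrite /e5; congr (x 0 _); apply: val_inj; rewrite /= inordK //.
Qed.
Lemma v3E x : x = v3 (e3 x 0) (e3 x 1) (e3 x 2).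
Proof.
apply/rowP => u; rewrite mxE; case: u => [[|[|[|m]]] Hu]; last by exfalso; move: Hu; rewrite !ltnS ltn0.
all: rewrite /e3; congr (x 0 _); apply: val_inj; rewrite /= inordK //.
Qed.
Lemma e5_v5 a b c d e :
  [/\ e5 (v5 a b c d e) 0 = a, e5 (v5 a b c d e) 1 = b, e5 (v5 a b c d e) 2 = c,
      e5 (v5 a b c d e) 3 = d & e5 (v5 a b c d e) 4 = e].
Proof. by rewrite /e5 !mxE !inordK. Qed.
Lemma e3_v3 a b c :
  [/\ e3 (v3 a b c) 0 = a, e3 (v3 a b c) 1 = b & e3 (v3 a b c) 2 = c].
Proof. by rewrite /e3 !mxE !inordK. Qed.

Lemma e30 a b c : e3 (v3 a b c) 0 = a. Proof. by rewrite /e3 mxE inordK. Qed.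
Lemma e31 a b c : e3 (v3 a b c) 1 = b. Proof. by rewrite /e3 mxE inordK. Qed.
Lemma e32 a b c : e3 (v3 a b c) 2 = c. Proof. by rewrite /e3 mxE inordK. Qed.
Lemma e50 a b c d e : e5 (v5 a b c d e) 0 = a. Proof. by rewrite /e5 mxE inordK. Qed.
Lemma e51 a b c d e : e5 (v5 a b c d e) 1 = b. Proof. by rewrite /e5 mxE inordK. Qed.
Lemma e52 a b c d e : e5 (v5 a b c d e) 2 = c. Proof. by rewrite /e5 mxE inordK. Qed.
Lemma e53 a b c d e : e5 (v5 a b c d e) 3 = d. Proof. by rewrite /e5 mxE inordK. Qed.
Lemma e54 a b c d e : e5 (v5 a b c d e) 4 = e. Proof. by rewrite /e5 mxE inordK. Qed.

Lemma v5D a b c d e a' b' c' d' e' :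
  v5 a b c d e + v5 a' b' c' d' e' = v5 (a + a') (b + b') (c + c') (d + d') (e + e').
Proof. by apply/rowP => u; rewrite !mxE; case: u => [[|[|[|[|[|m]]]]] Hu]. Qed.
Lemma v5Z k a b c d e : k *: v5 a b c d e = v5 (k * a) (k * b) (k * c) (k * d) (k * e).
Proof. by apply/rowP => u; rewrite !mxE; case: u => [[|[|[|[|[|m]]]]] Hu]. Qed.
Lemma v5N a b c d e : - v5 a b c d e = v5 (- a) (- b) (- c) (- d) (- e).
Proof. by apply/rowP => u; rewrite !mxE; case: u => [[|[|[|[|[|m]]]]] Hu] //=; rewrite oppr0. Qed.
Lemma v5_0 : (0 : 'rV[R]_5) = v5 0 0 0 0 0.
Proof. by apply/rowP => u; rewrite !mxE; case: u => [[|[|[|[|[|m]]]]] Hu]. Qed.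
Lemma v3D a b c a' b' c' : v3 a b c + v3 a' b' c' = v3 (a + a') (b + b') (c + c').
Proof. by apply/rowP => u; rewrite !mxE; case: u => [[|[|[|m]]] Hu]. Qed.
Lemma v3Z k a b c : k *: v3 a b c = v3 (k * a) (k * b) (k * c).
Proof. by apply/rowP => u; rewrite !mxE; case: u => [[|[|[|m]]] Hu]. Qed.
Lemma v3N a b c : - v3 a b c = v3 (- a) (- b) (- c).
Proof. by apply/rowP => u; rewrite !mxE; case: u => [[|[|[|m]]] Hu] //=; rewrite oppr0. Qed.
Lemma v3_0 : (0 : 'rV[R]_3) = v3 0 0 0.
Proof. by apply/rowP => u; rewrite !mxE; case: u => [[|[|[|m]]] Hu]. Qed.

Lemma v5_inj a b c d e a' b' c' d' e' :
  v5 a b c d e = v5 a' b' c' d' e' -> [/\ a = a', b = b', c = c', d = d' & e = e'].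
Proof.
move=> H; have := e5_v5 a b c d e; rewrite H.
by case: (e5_v5 a' b' c' d' e') => -> -> -> -> -> [] -> -> -> -> ->.
Qed.
Lemma v3_inj a b c a' b' c' : v3 a b c = v3 a' b' c' -> [/\ a = a', b = b' & c = c'].
Proof.
move=> H; have := e3_v3 a b c; rewrite H.
by case: (e3_v3 a' b' c') => -> -> -> [] -> -> ->.
Qed.

Lemma delta5 (k : 'I_5) : delta_mx 0 k = v5 (k == 0 :> nat)%:R (k == 1 :> nat)%:R
   (k == 2 :> nat)%:R (k == 3 :> nat)%:R (k == 4 :> nat)%:R.
Proof.
apply/rowP => u; rewrite !mxE /=.
case: u => [[|[|[|[|[|m]]]]] Hu] //=; rewrite -val_eqE /= ?[_ == k :> nat]eq_sym //.
Qed.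
Lemma delta3 (k : 'I_3) : delta_mx 0 k = v3 (k == 0 :> nat)%:R (k == 1 :> nat)%:R
   (k == 2 :> nat)%:R.
Proof.
apply/rowP => u; rewrite !mxE /=.
case: u => [[|[|[|m]]] Hu] //=; rewrite -val_eqE /= ?[_ == k :> nat]eq_sym //.
Qed.

Lemma XiE : Xi = v5 1 0 0 0 0. Proof. by rewrite /Xi delta5 inordK. Qed.
Lemma XjE : Xj = v5 0 1 0 0 0. Proof. by rewrite /Xj delta5 inordK. Qed.
Lemma YiE : Yi = v5 0 0 1 0 0. Proof. by rewrite /Yi delta5 inordK. Qed.
Lemma YjE : Yj = v5 0 0 0 1 0. Proof. by rewrite /Yj delta5 inordK. Qed.
Lemma YkE : Yk = v5 0 0 0 0 1. Proof. by rewrite /Yk delta5 inordK. Qed.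
Lemma ZiE : Zi = v3 1 0 0. Proof. by rewrite /Zi delta3 inordK. Qed.
Lemma ZjE : Zj = v3 0 1 0. Proof. by rewrite /Zj delta3 inordK. Qed.
Lemma ZkE : Zk = v3 0 0 1. Proof. by rewrite /Zk delta3 inordK. Qed.

Lemma dot5 a b c d e a' b' c' d' e' :
  dot (v5 a b c d e) (v5 a' b' c' d' e') = a * a' + b * b' + c * c' + d * d' + e * e'.
Proof. rewrite /dot !big_ord_recl big_ord0 !mxE /=; ring. Qed.
Lemma dot3 a b c a' b' c' :
  dot (v3 a b c) (v3 a' b' c') = a * a' + b * b' + c * c'.
Proof. rewrite /dot !big_ord_recl big_ord0 !mxE /=; ring. Qed.

Lemma brN5 a b c d e a' b' c' d' e' :
  brN (v5 a b c d e) (v5 a' b' c' d' e') =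
  v3 (b * e' - e * b') (- (a * e' - e * a')) (a * d' - d * a' - (b * c' - c * b')).
Proof.
rewrite /brN /brOf !big_ord_recl !big_ord0 /= !mxE /=.
rewrite /bbN /= ?ZiE ?ZjE ?ZkE.
rewrite ?scaler0 ?add0r ?addr0 !v3N !v3Z !v3D; congr v3; ring.
Qed.

Lemma brN'5 a b c d e a' b' c' d' e' :
  brN' (v5 a b c d e) (v5 a' b' c' d' e') =
  v3 (d * e' - e * d') (e * c' - c * e') (a * b' - b * a' + (c * d' - d * c')).
Proof.
rewrite /brN' /brOf !big_ord_recl !big_ord0 /= !mxE /=.
rewrite /bbN' /= ?ZiE ?ZjE ?ZkE.
rewrite ?scaler0 ?add0r ?addr0 !v3N !v3Z !v3D; congr v3; ring.
Qed.

Ltac cases5 u Hu := case: u => [[|[|[|[|[|?]]]]] Hu]; last by exfalso; move: Hu; rewrite !ltnS ltn0.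
Ltac cases3 u Hu := case: u => [[|[|[|?]]] Hu]; last by exfalso; move: Hu; rewrite !ltnS ltn0.

Lemma jN5 a b c x0 x1 x2 x3 x4 :
  jmap brN (v3 a b c) (v5 x0 x1 x2 x3 x4) =
  v5 (b * x4 - c * x3) (c * x2 - a * x4) (- (c * x1)) (c * x0) (a * x1 - b * x0).
Proof.
apply/rowP => u; rewrite !mxE; cases5 u Hu; rewrite delta5 /= brN5 dot3; ring.
Qed.
Lemma jN'5 a b c x0 x1 x2 x3 x4 :
  jmap brN' (v3 a b c) (v5 x0 x1 x2 x3 x4) =
  v5 (- (c * x1)) (c * x0) (b * x4 - c * x3) (c * x2 - a * x4) (a * x3 - b * x2).
Proof.
apply/rowP => u; rewrite !mxE; cases5 u Hu; rewrite delta5 /= brN'5 dot3; ring.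
Qed.

Lemma nablaN x0 x1 x2 x3 x4 a b c :
  nabla brN (v5 x0 x1 x2 x3 x4, v3 a b c) (v5 x0 x1 x2 x3 x4, v3 a b c) =
  (- jmap brN (v3 a b c) (v5 x0 x1 x2 x3 x4), 0).
Proof.
rewrite /nabla /koszul /ip /lie /=; congr pair.
- apply/rowP => u; rewrite !mxE; cases5 u Hu; rewrite delta5 /= v5_0 v3_0 !brN5 !dot5 !dot3 ?jN5 ?mxE /=; field; done.
- apply/rowP => u; rewrite !mxE; case: u => [[|[|[|?]]] Hu]; last by exfalso; move: Hu; rewrite !ltnS ltn0.
  all: rewrite delta3 /= v5_0 !brN5 !dot5 !dot3 ?mxE /=; field; done.
Qed.
Lemma nablaN' x0 x1 x2 x3 x4 a b c :
  nabla brN' (v5 x0 x1 x2 x3 x4, v3 a b c) (v5 x0 x1 x2 x3 x4, v3 a b c) =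
  (- jmap brN' (v3 a b c) (v5 x0 x1 x2 x3 x4), 0).
Proof.
rewrite /nabla /koszul /ip /lie /=; congr pair.
- apply/rowP => u; rewrite !mxE; cases5 u Hu; rewrite delta5 /= v5_0 v3_0 !brN'5 !dot5 !dot3 ?jN'5 ?mxE /=; field; done.
- apply/rowP => u; rewrite !mxE; case: u => [[|[|[|?]]] Hu]; last by exfalso; move: Hu; rewrite !ltnS ltn0.
  all: rewrite delta3 /= v5_0 !brN'5 !dot5 !dot3 ?mxE /=; field; done.
Qed.
End V5.
Ltac crush := rewrite ?e50 ?e51 ?e52 ?e53 ?e54 ?e30 ?e31 ?e32.
Ltac vnorm := repeat rewrite ?v5Z ?v5N ?v5D ?brN5 ?brN'5 ?v3Z ?v3N ?v3D.

Lemma vec5_cst (R : realType) (f : R -> 'rV[R]_5) :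
  (forall k t, (k < 5)%N -> DD t (fun s => e5 (f s) k) 0) -> forall s, f s = f 0.
Proof.
move=> H s; rewrite (v5E (f s)) (v5E (f 0)); congr v5;
  by apply: (@cst_of _ (fun s => e5 (f s) _)) => t; apply: H.
Qed.
Lemma vec3_cst (R : realType) (f : R -> 'rV[R]_3) :
  (forall k t, (k < 3)%N -> DD t (fun s => e3 (f s) k) 0) -> forall s, f s = f 0.
Proof.
move=> H s; rewrite (v3E (f s)) (v3E (f 0)); congr v3;
  by apply: (@cst_of _ (fun s => e3 (f s) _)) => t; apply: H.
Qed.
Lemma e3B (R : realType) (x y : 'rV[R]_3) k : e3 (x - y) k = e3 x k - e3 y k.
Proof. by rewrite /e3 !mxE. Qed.

Section CoreN.
Variable R : realType.
Variables (ci cj ck beta : R) (k0 k1 k2 k3 k4 : R) (p1 p2 r3 r4 : R -> R).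
Let s2 := ci ^+ 2 + cj ^+ 2.
Let N2 := ci ^+ 2 + cj ^+ 2 + ck ^+ 2.
Hypothesis s2n0 : s2 != 0.
Hypothesis ckn0 : ck != 0.
Hypothesis N2n0 : N2 != 0.
Hypotheses (Hp1 : forall t, DD t p1 (- ck * p2 t)) (Hp2 : forall t, DD t p2 (ck * p1 t))
  (Hr3 : forall t, DD t r3 (- N2 * r4 t)) (Hr4 : forall t, DD t r4 (r3 t)).

Definition nE1 : 'rV[R]_5 := v5 ci cj 0 0 0.
Definition nE2 : 'rV[R]_5 := v5 0 0 (- cj) ci 0.
Definition nF3 : 'rV[R]_5 := v5 cj (- ci) 0 0 0.
Definition nE4 : 'rV[R]_5 := v5 0 0 (ck * ci) (ck * cj) (- s2).
Definition nYZ : 'rV[R]_5 := v5 0 0 ci cj ck.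
Definition nZc : 'rV[R]_3 := v3 ci cj ck.

Definition wck s := p1 s *: nE1 + p2 s *: nE2.
Definition wc s := r3 s *: nF3 + r4 s *: nE4.
Definition Kwck s := (p2 s / ck) *: nE1 - (p1 s / ck) *: nE2.
Definition Kwc s := r4 s *: nF3 - (r3 s / N2) *: nE4.
Definition Kw s := Kwck s + Kwc s.
Definition K2w s := (- 1 / ck ^+ 2) *: wck s + (- 1 / N2) *: wc s.
Definition jwck s := ck *: (p1 s *: nE2 - p2 s *: nE1).
Definition jwc s := r3 s *: nE4 - (N2 * r4 s) *: nF3.
Definition Phi s := (1 / (N2 - ck ^+ 2)) *: (2 *: brN (wck s) (wc s)
   + (1 / N2 + 1 / ck ^+ 2) *: brN (jwck s) (jwc s)).
Definition GG s := s *: nZc + 2^-1 *: (brN (v5 k0 k1 k2 k3 k4) ((s * beta) *: nYZ + Kw s)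
   + (s * beta) *: brN nYZ (Kw s) + (2 * beta) *: brN (K2w s) nYZ
   + s *: brN (Kwck s) (wck s) + s *: brN (Kwc s) (wc s) + Phi s).

Ltac norm := rewrite /GG /Phi /jwc /jwck /K2w /Kw /Kwc /Kwck /wc /wck /nE1 /nE2 /nF3 /nE4 /nYZ /nZc
  /=;
  repeat rewrite ?v5Z ?v5N ?v5D ?brN5 ?v3Z ?v3N ?v3D.

Lemma GG_der0 t : DD t (fun s => e3 (GG s) 0)
  (e3 (nZc + 2^-1 *: brN (v5 k0 k1 k2 k3 k4 + (t * beta) *: nYZ + Kw t) (wck t + wc t + beta *: nYZ)) 0).
Proof.
apply: dExt; first by move=> s; norm; rewrite e30; reflexivity.
apply: dEq; first by dtac; first [apply: Hp1 | apply: Hp2 | apply: Hr3 | apply: Hr4].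
norm; rewrite e30 /=.
have h : ci ^+ 2 + cj ^+ 2 != 0 := s2n0. rewrite /N2 /s2; field.
by rewrite ckn0 N2n0 addrK s2n0.
Qed.
Lemma GG_der1 t : DD t (fun s => e3 (GG s) 1)
  (e3 (nZc + 2^-1 *: brN (v5 k0 k1 k2 k3 k4 + (t * beta) *: nYZ + Kw t) (wck t + wc t + beta *: nYZ)) 1).
Proof.
apply: dExt; first by move=> s; norm; rewrite e31; reflexivity.
apply: dEq; first by dtac; first [apply: Hp1 | apply: Hp2 | apply: Hr3 | apply: Hr4].
norm; rewrite e31 /=.
have h : ci ^+ 2 + cj ^+ 2 != 0 := s2n0. rewrite /N2 /s2; field.
by rewrite ckn0 N2n0 addrK s2n0.
Qed.
Lemma GG_der2 t : DD t (fun s => e3 (GG s) 2)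
  (e3 (nZc + 2^-1 *: brN (v5 k0 k1 k2 k3 k4 + (t * beta) *: nYZ + Kw t) (wck t + wc t + beta *: nYZ)) 2).
Proof.
apply: dExt; first by move=> s; norm; rewrite e32; reflexivity.
apply: dEq; first by dtac; first [apply: Hp1 | apply: Hp2 | apply: Hr3 | apply: Hr4].
norm; rewrite e32 /=.
have h : ci ^+ 2 + cj ^+ 2 != 0 := s2n0. rewrite /N2 /s2; field.
by rewrite ckn0 N2n0 addrK s2n0.
Qed.
End CoreN.

Section EN.
Context {R : realType}.
Variables (ci cj ck : R).
Let s2 := ci ^+ 2 + cj ^+ 2.
Let N2 := ci ^+ 2 + cj ^+ 2 + ck ^+ 2.
Definition cE1 (x : 'rV[R]_5) := ci * e5 x 0 + cj * e5 x 1.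
Definition cE2 (x : 'rV[R]_5) := - cj * e5 x 2 + ci * e5 x 3.
Definition cF3 (x : 'rV[R]_5) := cj * e5 x 0 - ci * e5 x 1.
Definition cE4 (x : 'rV[R]_5) := ck * ci * e5 x 2 + ck * cj * e5 x 3 - s2 * e5 x 4.
Definition cYZ (x : 'rV[R]_5) := ci * e5 x 2 + cj * e5 x 3 + ck * e5 x 4.
Definition jjN x := jmap brN (v3 ci cj ck) (jmap brN (v3 ci cj ck) x).

Lemma decN x : s2 != 0 -> N2 != 0 ->
  x = (cE1 x / s2) *: nE1 R ci cj + (cE2 x / s2) *: nE2 R ci cj + (cF3 x / s2) *: nF3 R ci cj
    + (cE4 x / (s2 * N2)) *: nE4 R ci cj ck + (cYZ x / N2) *: nYZ R ci cj ck.
Proof.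
move=> h1 h2; rewrite {1}(v5E x) /cE1 /cE2 /cF3 /cE4 /cYZ /nE1 /nE2 /nF3 /nE4 /nYZ.
vnorm; congr v5; rewrite /s2 /N2 in h1 h2 *; field; rewrite ?h1 ?h2 //.
Qed.

Ltac jjt x := rewrite /jjN (v5E x) !jN5 /cE1 /cE2 /cF3 /cE4 /cYZ; crush; rewrite /s2 /N2; ring.
Lemma cE1jj x : cE1 (jjN x) = - ck ^+ 2 * cE1 x. Proof. jjt x. Qed.
Lemma cE2jj x : cE2 (jjN x) = - ck ^+ 2 * cE2 x. Proof. jjt x. Qed.
Lemma cF3jj x : cF3 (jjN x) = - N2 * cF3 x. Proof. jjt x. Qed.
Lemma cE4jj x : cE4 (jjN x) = - N2 * cE4 x. Proof. jjt x. Qed.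
Lemma cYZjj x : cYZ (jjN x) = 0. Proof. jjt x. Qed.

Ltac lint := rewrite /cE1 /cE2 /cF3 /cE4 /cYZ /e5 !mxE; ring.
Lemma cE1Z k x : cE1 (k *: x) = k * cE1 x. Proof. lint. Qed.
Lemma cE2Z k x : cE2 (k *: x) = k * cE2 x. Proof. lint. Qed.
Lemma cF3Z k x : cF3 (k *: x) = k * cF3 x. Proof. lint. Qed.
Lemma cE4Z k x : cE4 (k *: x) = k * cE4 x. Proof. lint. Qed.
Lemma cYZZ k x : cYZ (k *: x) = k * cYZ x. Proof. lint. Qed.
Lemma cE1D x y : cE1 (x + y) = cE1 x + cE1 y. Proof. lint. Qed.
Lemma cE2D x y : cE2 (x + y) = cE2 x + cE2 y. Proof. lint. Qed.
Lemma cF3D x y : cF3 (x + y) = cF3 x + cF3 y. Proof. lint. Qed.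
Lemma cE4D x y : cE4 (x + y) = cE4 x + cE4 y. Proof. lint. Qed.
Lemma cYZD x y : cYZ (x + y) = cYZ x + cYZ y. Proof. lint. Qed.
End EN.

Section CoreM.
Variable R : realType.
Variables (ci cj ck beta : R) (k0 k1 k2 k3 k4 : R) (p1 p2 r3 r4 : R -> R).
Let s2 := ci ^+ 2 + cj ^+ 2.
Let N2 := ci ^+ 2 + cj ^+ 2 + ck ^+ 2.
Hypothesis s2n0 : s2 != 0.
Hypothesis ckn0 : ck != 0.
Hypothesis N2n0 : N2 != 0.
Hypotheses (Hp1 : forall t, DD t p1 (- ck * p2 t)) (Hp2 : forall t, DD t p2 (ck * p1 t))
  (Hr3 : forall t, DD t r3 (- N2 * r4 t)) (Hr4 : forall t, DD t r4 (r3 t)).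

Definition mE1 : 'rV[R]_5 := v5 1 0 0 0 0.
Definition mE2 : 'rV[R]_5 := v5 0 1 0 0 0.
Definition mF3 : 'rV[R]_5 := v5 0 0 cj (- ci) 0.
Definition mE4 : 'rV[R]_5 := v5 0 0 (ck * ci) (ck * cj) (- s2).
Definition mYZ : 'rV[R]_5 := v5 0 0 ci cj ck.
Definition mZc : 'rV[R]_3 := v3 ci cj ck.

Definition mwck s := p1 s *: mE1 + p2 s *: mE2.
Definition mwc s := r3 s *: mF3 + r4 s *: mE4.
Definition mKwck s := (p2 s / ck) *: mE1 - (p1 s / ck) *: mE2.
Definition mKwc s := r4 s *: mF3 - (r3 s / N2) *: mE4.
Definition mKw s := mKwck s + mKwc s.
Definition mK2w s := (- 1 / ck ^+ 2) *: mwck s + (- 1 / N2) *: mwc s.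
Definition mjwck s := ck *: (p1 s *: mE2 - p2 s *: mE1).
Definition mjwc s := r3 s *: mE4 - (N2 * r4 s) *: mF3.
Definition mPhi s := (1 / (N2 - ck ^+ 2)) *: (2 *: brN' (mwck s) (mwc s)
   + (1 / N2 + 1 / ck ^+ 2) *: brN' (mjwck s) (mjwc s)).
Definition mGG s := s *: mZc + 2^-1 *: (brN' (v5 k0 k1 k2 k3 k4) ((s * beta) *: mYZ + mKw s)
   + (s * beta) *: brN' mYZ (mKw s) + (2 * beta) *: brN' (mK2w s) mYZ
   + s *: brN' (mKwck s) (mwck s) + s *: brN' (mKwc s) (mwc s) + mPhi s).

Ltac mnorm := rewrite /mGG /mPhi /mjwc /mjwck /mK2w /mKw /mKwc /mKwck /mwc /mwck /mE1 /mE2 /mF3 /mE4 /mYZ /mZc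
  /=;
  repeat rewrite ?v5Z ?v5N ?v5D ?brN'5 ?v3Z ?v3N ?v3D.

Lemma mGG_der0 t : DD t (fun s => e3 (mGG s) 0)
  (e3 (mZc + 2^-1 *: brN' (v5 k0 k1 k2 k3 k4 + (t * beta) *: mYZ + mKw t) (mwck t + mwc t + beta *: mYZ)) 0).
Proof.
apply: dExt; first by move=> s; mnorm; rewrite e30; reflexivity.
apply: dEq; first by dtac; first [apply: Hp1 | apply: Hp2 | apply: Hr3 | apply: Hr4].
mnorm; rewrite e30 /=.
have h : ci ^+ 2 + cj ^+ 2 != 0 := s2n0. rewrite /N2 /s2; field.
by rewrite ckn0 N2n0 addrK s2n0.
Qed.
Lemma mGG_der1 t : DD t (fun s => e3 (mGG s) 1)
  (e3 (mZc + 2^-1 *: brN' (v5 k0 k1 k2 k3 k4 + (t * beta) *: mYZ + mKw t) (mwck t + mwc t + beta *: mYZ)) 1).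
Proof.
apply: dExt; first by move=> s; mnorm; rewrite e31; reflexivity.
apply: dEq; first by dtac; first [apply: Hp1 | apply: Hp2 | apply: Hr3 | apply: Hr4].
mnorm; rewrite e31 /=.
have h : ci ^+ 2 + cj ^+ 2 != 0 := s2n0. rewrite /N2 /s2; field.
by rewrite ckn0 N2n0 addrK s2n0.
Qed.
Lemma mGG_der2 t : DD t (fun s => e3 (mGG s) 2)
  (e3 (mZc + 2^-1 *: brN' (v5 k0 k1 k2 k3 k4 + (t * beta) *: mYZ + mKw t) (mwck t + mwc t + beta *: mYZ)) 2).
Proof.
apply: dExt; first by move=> s; mnorm; rewrite e32; reflexivity.
apply: dEq; first by dtac; first [apply: Hp1 | apply: Hp2 | apply: Hr3 | apply: Hr4].
mnorm; rewrite e32 /=.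
have h : ci ^+ 2 + cj ^+ 2 != 0 := s2n0. rewrite /N2 /s2; field.
by rewrite ckn0 N2n0 addrK s2n0.
Qed.
End CoreM.

Section EM.
Context {R : realType}.
Variables (ci cj ck : R).
Let s2 := ci ^+ 2 + cj ^+ 2.
Let N2 := ci ^+ 2 + cj ^+ 2 + ck ^+ 2.
Definition dE1 (x : 'rV[R]_5) := e5 x 0.
Definition dE2 (x : 'rV[R]_5) := e5 x 1.
Definition dF3 (x : 'rV[R]_5) := cj * e5 x 2 - ci * e5 x 3.
Definition dE4 (x : 'rV[R]_5) := ck * ci * e5 x 2 + ck * cj * e5 x 3 - s2 * e5 x 4.
Definition dYZ (x : 'rV[R]_5) := ci * e5 x 2 + cj * e5 x 3 + ck * e5 x 4.
Definition jjM x := jmap brN' (v3 ci cj ck) (jmap brN' (v3 ci cj ck) x).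

Lemma decM x : s2 != 0 -> N2 != 0 ->
  x = dE1 x *: mE1 R + dE2 x *: mE2 R + (dF3 x / s2) *: mF3 R ci cj
    + (dE4 x / (s2 * N2)) *: mE4 R ci cj ck + (dYZ x / N2) *: mYZ R ci cj ck.
Proof.
move=> h1 h2; rewrite {1}(v5E x) /dE1 /dE2 /dF3 /dE4 /dYZ /mE1 /mE2 /mF3 /mE4 /mYZ.
vnorm; congr v5; rewrite /s2 /N2 in h1 h2 *; field; rewrite ?h1 ?h2 //.
Qed.

Ltac mjjt x := rewrite /jjM (v5E x) !jN'5 /dE1 /dE2 /dF3 /dE4 /dYZ; crush; rewrite /s2 /N2; ring.
Lemma dE1jj x : dE1 (jjM x) = - ck ^+ 2 * dE1 x. Proof. mjjt x. Qed.
Lemma dE2jj x : dE2 (jjM x) = - ck ^+ 2 * dE2 x. Proof. mjjt x. Qed.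
Lemma dF3jj x : dF3 (jjM x) = - N2 * dF3 x. Proof. mjjt x. Qed.
Lemma dE4jj x : dE4 (jjM x) = - N2 * dE4 x. Proof. mjjt x. Qed.
Lemma dYZjj x : dYZ (jjM x) = 0. Proof. mjjt x. Qed.

Ltac mlint := rewrite /dE1 /dE2 /dF3 /dE4 /dYZ /e5 !mxE; ring.
Lemma dE1Z k x : dE1 (k *: x) = k * dE1 x. Proof. mlint. Qed.
Lemma dE2Z k x : dE2 (k *: x) = k * dE2 x. Proof. mlint. Qed.
Lemma dF3Z k x : dF3 (k *: x) = k * dF3 x. Proof. mlint. Qed.
Lemma dE4Z k x : dE4 (k *: x) = k * dE4 x. Proof. mlint. Qed.
Lemma dYZZ k x : dYZ (k *: x) = k * dYZ x. Proof. mlint. Qed.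
Lemma dE1D x y : dE1 (x + y) = dE1 x + dE1 y. Proof. mlint. Qed.
Lemma dE2D x y : dE2 (x + y) = dE2 x + dE2 y. Proof. mlint. Qed.
Lemma dF3D x y : dF3 (x + y) = dF3 x + dF3 y. Proof. mlint. Qed.
Lemma dE4D x y : dE4 (x + y) = dE4 x + dE4 y. Proof. mlint. Qed.
Lemma dYZD x y : dYZ (x + y) = dYZ x + dYZ y. Proof. mlint. Qed.
End EM.

Lemma C1_DD (R : realType) n (f : R -> 'rV[R]_n) u t :
  C1curve f -> DD t (fun s => f s 0 u) (dcurve f t 0 u).
Proof. move=> H; rewrite /dcurve mxE derive1E; exact: derivableP (H u t). Qed.
Arguments C1_DD {R n f}.

Lemma ZcE (R : realType) (ci cj ck : R) : Zc ci cj ck = v3 ci cj ck.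
Proof. rewrite /Zc ZiE ZjE ZkE !v3Z !v3D; congr v3; ring. Qed.

Lemma dotD (R : realType) n (x y z : 'rV[R]_n) : dot (x + y) z = dot x z + dot y z.
Proof. by rewrite /dot -big_split; apply: eq_bigr => i _; rewrite mxE mulrDl. Qed.

Lemma caseN (R : realType) :
  (forall (ci cj ck : R) (V Vck Vc V0 : 'rV[R]_5)
     (gv : R -> 'rV[R]_5) (gz : R -> 'rV[R]_3) (z : 'rV[R]_3) (v : 'rV[R]_5)
     (tau beta a1 a2 a3 a4 xi xj yi yj yk : R),
   `|ck| < cnorm ci cj ck -> 0 < `|ck| ->
   V = Vck + Vc + V0 ->
   eigcomp brN (Zc ci cj ck) ck Vck -> eigcomp brN (Zc ci cj ck) (cnorm ci cj ck) Vc ->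
   eigcomp brN (Zc ci cj ck) 0 V0 ->
   Vck != 0 -> Vc != 0 -> V0 != 0 ->
   geodesic brN gv gz ->
   (gv 0, gz 0) = (v, z) -> ltv brN gv gz 0 = (V, Zc ci cj ck) ->
   0 < tau -> ltv brN gv gz tau = (V, Zc ci cj ck) ->
   V0 = beta *: YZ ci cj ck ->
   Vck + Vc = a1 *: E1 ci cj ck + a2 *: E2 ci cj ck + a3 *: E3 ci cj ck + a4 *: E4 ci cj ck ->
   v = xi *: Xi + xj *: Xj + yi *: Yi + yj *: Yj + yk *: Yk ->
   [/\ exists n : int, tau * ck = 2 * pi * n%:~R,
       exists n : int, tau * cnorm ci cj ck = 2 * pi * n%:~R &
       gmul brN (gv tau, gz tau) (ginv (gv 0, gz 0)) =
       (tau *: V0,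
        (tau * (1 + dot (Vck + Vc) (Vck + Vc) / (2 * cnorm ci cj ck ^+ 2))) *: Zc ci cj ck
        + (tau * beta * (a2 - ck / (ci ^+ 2 + cj ^+ 2) * (xi * ci + xj * cj)))
            *: (- cj *: Zi + ci *: Zj)
        + (tau * (- (dot Vck Vck) / (2 * ck * cnorm ci cj ck ^+ 2)
                  + beta * (a4 - 1 / (ci ^+ 2 + cj ^+ 2) * (xi * cj - xj * ci))))
            *: (ck *: (ci *: Zi + cj *: Zj) - (ci ^+ 2 + cj ^+ 2) *: Zk))]).
Proof.
move=> ci cj ck V Vck Vc V0 gv gz z v tau beta a1 a2 a3 a4 xi xj yi yj yk.
move=> Hlt Hck HV EVck EVc EV0 nVck nVc nV0 Hgeo Hinit HA0 Htau HAt HV0 HVp Hv.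
set n := cnorm ci cj ck.
have ck0 : ck != 0 by rewrite -normr_gt0.
have N2ge0 : 0 <= ci ^+ 2 + cj ^+ 2 + ck ^+ 2 by rewrite !addr_ge0 ?sqr_ge0.
have nN : n ^+ 2 = ci ^+ 2 + cj ^+ 2 + ck ^+ 2 by rewrite sqr_sqrtr.
have n0 : 0 <= n by rewrite sqrtr_ge0.
have s2pos : 0 < ci ^+ 2 + cj ^+ 2.
  have : `|ck| ^+ 2 < n ^+ 2 by rewrite ltr_pXn2r ?normr_ge0.
  rewrite nN real_normK ?num_real // => h; lra.
have s2n0 : ci ^+ 2 + cj ^+ 2 != 0 by rewrite gt_eqF.
have N2n0 : ci ^+ 2 + cj ^+ 2 + ck ^+ 2 != 0.
  have := sqr_ge0 ck; move=> h; rewrite gt_eqF //; lra.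
rewrite ZcE in EVck EVc EV0 HA0 HAt *.
case: Hgeo => C1g C1z C1a C1b Heq.
set A1 := fun t => (ltv brN gv gz t).1.
set A2 := fun t => (ltv brN gv gz t).2.
have HA : forall t, dcurve A1 t = jmap brN (A2 t) (A1 t) /\ dcurve A2 t = 0.
  move=> t; have E : ltv brN gv gz t = (A1 t, A2 t) by rewrite /A1 /A2; case: (ltv _ _ _ _).
  have := Heq t; rewrite E.
  have -> : nabla brN (A1 t, A2 t) (A1 t, A2 t) = (- jmap brN (A2 t) (A1 t), 0).
    by rewrite {1 2 3}(v5E (A1 t)) {1 2 3}(v3E (A2 t)) nablaN.
  rewrite /nadd => -[] e1 e2.
  by split; [apply/eqP; rewrite -subr_eq0 e1 | rewrite -e2 addr0].
have A2c : forall t, A2 t = v3 ci cj ck.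
  move=> t; rewrite -[RHS](congr1 snd HA0) -/(A2 0); apply/rowP => k.
  apply: (@cst_of _ (fun s => A2 s 0 k)) => s; apply: dEq; first exact: (C1_DD k s C1b).
  by rewrite (HA s).2 mxE.
have Hw : forall (k : nat) t, DD t (fun s => e5 (A1 s) k) (e5 (jmap brN (v3 ci cj ck) (A1 t)) k).
  move=> k t; apply: dEq; first exact: (C1_DD (inord k) t C1a).
  by rewrite (HA t).1 A2c.
have Hw0 : forall t, DD t (fun s => e5 (A1 s) 0) (cj * e5 (A1 t) 4 - ck * e5 (A1 t) 3).
  by move=> t; apply: dEq (Hw 0%N t) _; rewrite {1}(v5E (A1 t)) jN5 e50.
have Hw1 : forall t, DD t (fun s => e5 (A1 s) 1) (ck * e5 (A1 t) 2 - ci * e5 (A1 t) 4).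
  by move=> t; apply: dEq (Hw 1%N t) _; rewrite {1}(v5E (A1 t)) jN5 e51.
have Hw2 : forall t, DD t (fun s => e5 (A1 s) 2) (- (ck * e5 (A1 t) 1)).
  by move=> t; apply: dEq (Hw 2%N t) _; rewrite {1}(v5E (A1 t)) jN5 e52.
have Hw3 : forall t, DD t (fun s => e5 (A1 s) 3) (ck * e5 (A1 t) 0).
  by move=> t; apply: dEq (Hw 3%N t) _; rewrite {1}(v5E (A1 t)) jN5 e53.
have Hw4 : forall t, DD t (fun s => e5 (A1 s) 4) (ci * e5 (A1 t) 1 - cj * e5 (A1 t) 0).
  by move=> t; apply: dEq (Hw 4%N t) _; rewrite {1}(v5E (A1 t)) jN5 e54.
have Hx : forall (k : nat) t, DD t (fun s => e5 (gv s) k) (e5 (A1 t) k).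
  by move=> k t; exact: (C1_DD (inord k) t C1g).
have Hh : forall (k : nat) t, DD t (fun s => e3 (gz s) k)
    (e3 (v3 ci cj ck + 2^-1 *: brN (gv t) (A1 t)) k).
  move=> k t; apply: dEq; first exact: (C1_DD (inord k) t C1z).
  by rewrite -(A2c t) /A2 /A1 /ltv /= subrK.
pose p1 := fun s => (ci * e5 (A1 s) 0 + cj * e5 (A1 s) 1) / (ci ^+ 2 + cj ^+ 2).
pose p2 := fun s => (- cj * e5 (A1 s) 2 + ci * e5 (A1 s) 3) / (ci ^+ 2 + cj ^+ 2).
pose r3 := fun s => (cj * e5 (A1 s) 0 - ci * e5 (A1 s) 1) / (ci ^+ 2 + cj ^+ 2).
pose r4 := fun s => (ck * ci * e5 (A1 s) 2 + ck * cj * e5 (A1 s) 3 - (ci ^+ 2 + cj ^+ 2) * e5 (A1 s) 4)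
   / ((ci ^+ 2 + cj ^+ 2) * (ci ^+ 2 + cj ^+ 2 + ck ^+ 2)).
pose q := fun s => (ci * e5 (A1 s) 2 + cj * e5 (A1 s) 3 + ck * e5 (A1 s) 4) / (ci ^+ 2 + cj ^+ 2 + ck ^+ 2).
have Hp1 : forall t, DD t p1 (- ck * p2 t).
  move=> t; rewrite /p1; apply: dEq.
    by dtacH ltac:(first [apply: Hw0 | apply: Hw1 | apply: Hw2 | apply: Hw3 | apply: Hw4]).
  by rewrite /p2; field.
have Hp2 : forall t, DD t p2 (ck * p1 t).
  move=> t; rewrite /p2; apply: dEq.
    by dtacH ltac:(first [apply: Hw0 | apply: Hw1 | apply: Hw2 | apply: Hw3 | apply: Hw4]).
  by rewrite /p1; field.
have Hr3 : forall t, DD t r3 (- (ci ^+ 2 + cj ^+ 2 + ck ^+ 2) * r4 t).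
  move=> t; rewrite /r3; apply: dEq.
    by dtacH ltac:(first [apply: Hw0 | apply: Hw1 | apply: Hw2 | apply: Hw3 | apply: Hw4]).
  by rewrite /r4; field; rewrite s2n0 N2n0.
have Hr4 : forall t, DD t r4 (r3 t).
  move=> t; rewrite /r4; apply: dEq.
    by dtacH ltac:(first [apply: Hw0 | apply: Hw1 | apply: Hw2 | apply: Hw3 | apply: Hw4]).
  by rewrite /r3; field; rewrite s2n0 N2n0.
have Hq : forall t, DD t q 0.
  move=> t; rewrite /q; apply: dEq.
    by dtacH ltac:(first [apply: Hw0 | apply: Hw1 | apply: Hw2 | apply: Hw3 | apply: Hw4]).
  by rewrite /=; field.

have Hqc : forall s, q s = q 0 by move=> s; apply: cst_of.
have HA1dec : forall s, A1 s = @wck R ci cj p1 p2 s + @wc R ci cj ck r3 r4 s + q 0 *: @nYZ R ci cj ck.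
  move=> s; rewrite -(Hqc s) {1}(v5E (A1 s)) /wck /wc /nE1 /nE2 /nF3 /nE4 /nYZ /p1 /p2 /r3 /r4 /q.
  vnorm; congr v5; field; rewrite ?s2n0 ?N2n0 //.
have HA10 : A1 0 = V by rewrite /A1 HA0.
have HA1t : A1 tau = V by rewrite /A1 HAt.
have Vexp : V = v5 (a1 * ci + (a3 * n) * cj) (a1 * cj - (a3 * n) * ci)
    (- a2 * cj + a4 * ck * ci + beta * ci) (a2 * ci + a4 * ck * cj + beta * cj)
    (- a4 * (ci ^+ 2 + cj ^+ 2) + beta * ck).
  rewrite HV HVp HV0 /E1 /E2 /E3 /E4 /YZ -/n XiE XjE YiE YjE YkE; vnorm; congr v5; ring.

have P10 : p1 0 = a1 by rewrite /p1 HA10 Vexp; crush; field.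
have P20 : p2 0 = a2 by rewrite /p2 HA10 Vexp; crush; field.
have R30 : r3 0 = a3 * n by rewrite /r3 HA10 Vexp; crush; field.
have R40 : r4 0 = a4 by rewrite /r4 HA10 Vexp; crush; field; rewrite ?s2n0 ?N2n0.
have Q0 : q 0 = beta by rewrite /q HA10 Vexp; crush; field.
have P1t : p1 tau = p1 0 by rewrite /p1 HA1t HA10.
have P2t : p2 tau = p2 0 by rewrite /p2 HA1t HA10.
have R3t : r3 tau = r3 0 by rewrite /r3 HA1t HA10.
have R4t : r4 tau = r4 0 by rewrite /r4 HA1t HA10.
rewrite Q0 in HA1dec.
clearbody p1 p2 r3 r4 q A1 A2.
pose kap := gv 0 - @Kw R ci cj ck p1 p2 r3 r4 0.
have HG : forall s, gv s = kap + (s * beta) *: @nYZ R ci cj ck + @Kw R ci cj ck p1 p2 r3 r4 s.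
{   suff : forall s, gv s - (s * beta) *: @nYZ R ci cj ck - @Kw R ci cj ck p1 p2 r3 r4 s =
     gv 0 - (0 * beta) *: @nYZ R ci cj ck - @Kw R ci cj ck p1 p2 r3 r4 0.
    move=> h s; move: (h s); rewrite mul0r scale0r subr0 -/kap => <-.
    by rewrite addrAC subrK subrK.
  apply: vec5_cst => k t; case: k => [|[|[|[|[|k]]]]] // _.
  all: apply: dExt; first (move=> s; rewrite (v5E (gv s)) /Kw /Kwck /Kwc /nE1 /nE2 /nF3 /nE4 /nYZ;
       vnorm; crush; reflexivity).
  all: apply: dEq; first (dtacH ltac:(first [apply: Hp1 | apply: Hp2 | apply: Hr3 | apply: Hr4
       | apply: (Hx 0%N) | apply: (Hx 1%N) | apply: (Hx 2%N) | apply: (Hx 3%N) | apply: (Hx 4%N)])).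
  all: rewrite HA1dec /wck /wc /nE1 /nE2 /nF3 /nE4 /nYZ; vnorm; crush.
  all: rewrite /=; field; rewrite ?s2n0 ?N2n0 //. }

have HGG : forall s, gz s - @GG R ci cj ck beta (e5 kap 0) (e5 kap 1) (e5 kap 2) (e5 kap 3) (e5 kap 4) p1 p2 r3 r4 s
   = gz 0 - @GG R ci cj ck beta (e5 kap 0) (e5 kap 1) (e5 kap 2) (e5 kap 3) (e5 kap 4) p1 p2 r3 r4 0.
{ apply: vec3_cst => k t; case: k => [|[|[|k]]] // _.
  - apply: dExt; first by move=> s; rewrite e3B.
    apply: dEq; first by apply: dAdd; [exact: (Hh 0%N t) | apply: dOpp; exact: (@GG_der0 R ci cj ck beta (e5 kap 0) (e5 kap 1) (e5 kap 2) (e5 kap 3) (e5 kap 4) p1 p2 r3 r4 s2n0 ck0 N2n0 Hp1 Hp2 Hr3 Hr4 t)].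
    by rewrite (HG t) HA1dec {1}(v5E kap) /nZc subrr.
  - apply: dExt; first by move=> s; rewrite e3B.
    apply: dEq; first by apply: dAdd; [exact: (Hh 1%N t) | apply: dOpp; exact: (@GG_der1 R ci cj ck beta (e5 kap 0) (e5 kap 1) (e5 kap 2) (e5 kap 3) (e5 kap 4) p1 p2 r3 r4 s2n0 ck0 N2n0 Hp1 Hp2 Hr3 Hr4 t)].
    by rewrite (HG t) HA1dec {1}(v5E kap) /nZc subrr.
  - apply: dExt; first by move=> s; rewrite e3B.
    apply: dEq; first by apply: dAdd; [exact: (Hh 2%N t) | apply: dOpp; exact: (@GG_der2 R ci cj ck beta (e5 kap 0) (e5 kap 1) (e5 kap 2) (e5 kap 3) (e5 kap 4) p1 p2 r3 r4 s2n0 ck0 N2n0 Hp1 Hp2 Hr3 Hr4 t)].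
    by rewrite (HG t) HA1dec {1}(v5E kap) /nZc subrr. }

have ck2 : 0 < ck ^+ 2 by rewrite exprn_even_gt0 //= ck0.
have EVck' : jjN ci cj ck Vck = - (ck ^+ 2) *: Vck := EVck.
have EVc' : jjN ci cj ck Vc = - (n ^+ 2) *: Vc := EVc.
rewrite nN in EVc'.
have zF3 : cF3 ci cj Vck = 0.
  apply: (@cancel_lin R (- (ci ^+ 2 + cj ^+ 2 + ck ^+ 2)) (- ck ^+ 2)).
    by rewrite -cF3jj EVck' cF3Z.
  by apply/eqP => e; lra.
have zE4 : cE4 ci cj ck Vck = 0.
  apply: (@cancel_lin R (- (ci ^+ 2 + cj ^+ 2 + ck ^+ 2)) (- ck ^+ 2)).
    by rewrite -cE4jj EVck' cE4Z.
  by apply/eqP => e; lra.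
have zYZ : cYZ ci cj ck Vck = 0.
  apply: (@cancel_lin R 0 (- ck ^+ 2)).
    by rewrite mul0r -(cYZjj ci cj ck Vck) EVck' cYZZ.
  by apply/eqP => e; lra.
have zE1 : cE1 ci cj Vc = 0.
  apply: (@cancel_lin R (- ck ^+ 2) (- (ci ^+ 2 + cj ^+ 2 + ck ^+ 2))).
    by rewrite -cE1jj EVc' cE1Z.
  by apply/eqP => e; lra.
have zE2 : cE2 ci cj Vc = 0.
  apply: (@cancel_lin R (- ck ^+ 2) (- (ci ^+ 2 + cj ^+ 2 + ck ^+ 2))).
    by rewrite -cE2jj EVc' cE2Z.
  by apply/eqP => e; lra.
have zYZc : cYZ ci cj ck Vc = 0.
  apply: (@cancel_lin R 0 (- (ci ^+ 2 + cj ^+ 2 + ck ^+ 2))).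
    by rewrite mul0r -(cYZjj ci cj ck Vc) EVc' cYZZ.
  by apply/eqP => e; lra.
have HVpE : Vck + Vc = v5 (a1 * ci + (a3 * n) * cj) (a1 * cj - (a3 * n) * ci)
    (- a2 * cj + a4 * ck * ci) (a2 * ci + a4 * ck * cj) (- a4 * (ci ^+ 2 + cj ^+ 2)).
  rewrite HVp /E1 /E2 /E3 /E4 -/n XiE XjE YiE YjE YkE; vnorm; congr v5; ring.
have c1 : cE1 ci cj Vck = a1 * (ci ^+ 2 + cj ^+ 2).
  have := congr1 (cE1 ci cj) HVpE; rewrite cE1D zE1 addr0 => ->; rewrite /cE1; crush; ring.
have c2 : cE2 ci cj Vck = a2 * (ci ^+ 2 + cj ^+ 2).
  have := congr1 (cE2 ci cj) HVpE; rewrite cE2D zE2 addr0 => ->; rewrite /cE2; crush; ring.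
have c3 : cF3 ci cj Vc = a3 * n * (ci ^+ 2 + cj ^+ 2).
  have := congr1 (cF3 ci cj) HVpE; rewrite cF3D zF3 add0r => ->; rewrite /cF3; crush; ring.
have c4 : cE4 ci cj ck Vc = a4 * ((ci ^+ 2 + cj ^+ 2) * (ci ^+ 2 + cj ^+ 2 + ck ^+ 2)).
  have := congr1 (cE4 ci cj ck) HVpE; rewrite cE4D zE4 add0r => ->; rewrite /cE4; crush; ring.
have Vck_a : Vck = a1 *: @nE1 R ci cj + a2 *: @nE2 R ci cj.
  rewrite {1}(decN ci cj ck Vck s2n0 N2n0) zF3 zE4 zYZ c1 c2 !mul0r !scale0r !addr0 !mulfK //.
have Vc_a : Vc = (a3 * n) *: @nF3 R ci cj + a4 *: @nE4 R ci cj ck.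
  rewrite {1}(decN ci cj ck Vc s2n0 N2n0) zE1 zE2 zYZc c3 c4 !mul0r !scale0r !add0r addr0 !mulfK //.
  by rewrite mulf_neq0.
have n_gt0 : 0 < n by apply: lt_trans Hck Hlt.
have nz1 : a1 ^+ 2 + a2 ^+ 2 != 0.
  apply: contraNneq nVck => h.
  have ha1 : a1 = 0 by nra.
  have ha2 : a2 = 0 by nra.
  by rewrite Vck_a ha1 ha2 !scale0r addr0.
have nz2 : (a3 * n) ^+ 2 + (n * a4) ^+ 2 != 0.
  apply: contraNneq nVc => h.
  have ha3 : a3 * n = 0 by nra.
  have ha4 : n * a4 = 0 by nra.
  have ha4' : a4 = 0 by move/eqP: ha4; rewrite mulf_eq0 gt_eqF //= => /eqP.
  by rewrite Vc_a ha3 ha4' !scale0r addr0.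
have cck : cos (ck * tau) = 1.
  by apply: (@rot_period R p1 p2 ck tau Hp1 Hp2 P1t P2t); rewrite P10 P20.
have ccn : cos (n * tau) = 1.
  apply: (@rot_period R r3 (fun s => n * r4 s) n tau).
  - by move=> t; apply: dEq (Hr3 t) _; rewrite -nN; ring.
  - move=> t; apply: dEq; first by apply: dMul; [apply: dCst | apply: Hr4].
    by rewrite /=; ring.
  - exact: R3t.
  - by rewrite R4t.
  - by rewrite R30 R40.
split.
- by have [m hm] := @cos1_int R _ cck; exists m; rewrite mulrC.
- by have [m hm] := @cos1_int R _ ccn; exists m; rewrite mulrC.
have Hgzt : gz tau = gz 0 - @GG R ci cj ck beta (e5 kap 0) (e5 kap 1) (e5 kap 2) (e5 kap 3) (e5 kap 4) p1 p2 r3 r4 0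
   + @GG R ci cj ck beta (e5 kap 0) (e5 kap 1) (e5 kap 2) (e5 kap 3) (e5 kap 4) p1 p2 r3 r4 tau.
  by rewrite -(HGG tau) subrK.
rewrite /gmul /ginv /= Hgzt (HG tau) /kap.
case: Hinit => -> ->.
rewrite (v3E z).
rewrite /GG /Phi /jwc /jwck /K2w /Kw /Kwc /Kwck /wc /wck P1t P2t R3t R4t P10 P20 R30 R40.
rewrite Vck_a Vc_a HV0 Hv /YZ /nE1 /nE2 /nF3 /nE4 /nYZ /nZc XiE XjE YiE YjE YkE ZiE ZjE ZkE.
vnorm; rewrite !dot5; vnorm; crush.
rewrite nN.
move: (a3 * n) => b3.
congr pair; [congr v5 | congr v3]; field; rewrite ?s2n0 ?N2n0 ?ck0 //.
Qed.

Lemma caseM (R : realType) :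
  (forall (ci cj ck : R) (V Vck Vc V0 : 'rV[R]_5)
     (gv : R -> 'rV[R]_5) (gz : R -> 'rV[R]_3) (z : 'rV[R]_3) (v : 'rV[R]_5)
     (tau beta a1 a2 a3 a4 xi xj yi yj yk : R),
   `|ck| < cnorm ci cj ck -> 0 < `|ck| ->
   V = Vck + Vc + V0 ->
   eigcomp brN' (Zc ci cj ck) ck Vck -> eigcomp brN' (Zc ci cj ck) (cnorm ci cj ck) Vc ->
   eigcomp brN' (Zc ci cj ck) 0 V0 ->
   Vck != 0 -> Vc != 0 -> V0 != 0 ->
   geodesic brN' gv gz ->
   (gv 0, gz 0) = (v, z) -> ltv brN' gv gz 0 = (V, Zc ci cj ck) ->
   0 < tau -> ltv brN' gv gz tau = (V, Zc ci cj ck) ->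
   V0 = beta *: YZ ci cj ck ->
   Vck + Vc = a1 *: E1' ci cj ck + a2 *: E2' ci cj ck + a3 *: E3' ci cj ck + a4 *: E4' ci cj ck ->
   v = xi *: Xi + xj *: Xj + yi *: Yi + yj *: Yj + yk *: Yk ->
   [/\ exists n : int, tau * ck = 2 * pi * n%:~R,
       exists n : int, tau * cnorm ci cj ck = 2 * pi * n%:~R &
       gmul brN' (gv tau, gz tau) (ginv (gv 0, gz 0)) =
       (tau *: V0,
        (tau * (1 + dot (Vck + Vc) (Vck + Vc) / (2 * cnorm ci cj ck ^+ 2))) *: Zc ci cj ck
        + (tau * beta * (- cnorm ci cj ck * a3 + yk
                         - ck / (ci ^+ 2 + cj ^+ 2) * (yi * ci + yj * cj)))
            *: (- cj *: Zi + ci *: Zj)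
        + (tau * (- (dot Vck Vck) / (2 * ck * cnorm ci cj ck ^+ 2)
                  + beta * (a4 - 1 / (ci ^+ 2 + cj ^+ 2) * (yi * cj - yj * ci))))
            *: (ck *: (ci *: Zi + cj *: Zj) - (ci ^+ 2 + cj ^+ 2) *: Zk))]).
Proof.
move=> ci cj ck V Vck Vc V0 gv gz z v tau beta a1 a2 a3 a4 xi xj yi yj yk.
move=> Hlt Hck HV EVck EVc EV0 nVck nVc nV0 Hgeo Hinit HA0 Htau HAt HV0 HVp Hv.
set n := cnorm ci cj ck.
have ck0 : ck != 0 by rewrite -normr_gt0.
have N2ge0 : 0 <= ci ^+ 2 + cj ^+ 2 + ck ^+ 2 by rewrite !addr_ge0 ?sqr_ge0.
have nN : n ^+ 2 = ci ^+ 2 + cj ^+ 2 + ck ^+ 2 by rewrite sqr_sqrtr.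
have n0 : 0 <= n by rewrite sqrtr_ge0.
have s2pos : 0 < ci ^+ 2 + cj ^+ 2.
  have : `|ck| ^+ 2 < n ^+ 2 by rewrite ltr_pXn2r ?normr_ge0.
  rewrite nN real_normK ?num_real // => h; lra.
have s2n0 : ci ^+ 2 + cj ^+ 2 != 0 by rewrite gt_eqF.
have N2n0 : ci ^+ 2 + cj ^+ 2 + ck ^+ 2 != 0.
  have := sqr_ge0 ck; move=> h; rewrite gt_eqF //; lra.
rewrite ZcE in EVck EVc EV0 HA0 HAt *.
case: Hgeo => C1g C1z C1a C1b Heq.
set A1 := fun t => (ltv brN' gv gz t).1.
set A2 := fun t => (ltv brN' gv gz t).2.
have HA : forall t, dcurve A1 t = jmap brN' (A2 t) (A1 t) /\ dcurve A2 t = 0.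
  move=> t; have E : ltv brN' gv gz t = (A1 t, A2 t) by rewrite /A1 /A2; case: (ltv _ _ _ _).
  have := Heq t; rewrite E.
  have -> : nabla brN' (A1 t, A2 t) (A1 t, A2 t) = (- jmap brN' (A2 t) (A1 t), 0).
    by rewrite {1 2 3}(v5E (A1 t)) {1 2 3}(v3E (A2 t)) nablaN'.
  rewrite /nadd => -[] e1 e2.
  by split; [apply/eqP; rewrite -subr_eq0 e1 | rewrite -e2 addr0].
have A2c : forall t, A2 t = v3 ci cj ck.
  move=> t; rewrite -[RHS](congr1 snd HA0) -/(A2 0); apply/rowP => k.
  apply: (@cst_of _ (fun s => A2 s 0 k)) => s; apply: dEq; first exact: (C1_DD k s C1b).
  by rewrite (HA s).2 mxE.
have Hw : forall (k : nat) t, DD t (fun s => e5 (A1 s) k) (e5 (jmap brN' (v3 ci cj ck) (A1 t)) k).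
  move=> k t; apply: dEq; first exact: (C1_DD (inord k) t C1a).
  by rewrite (HA t).1 A2c.
have Hw0 : forall t, DD t (fun s => e5 (A1 s) 0) (- (ck * e5 (A1 t) 1)).
  by move=> t; apply: dEq (Hw 0%N t) _; rewrite {1}(v5E (A1 t)) jN'5 e50.
have Hw1 : forall t, DD t (fun s => e5 (A1 s) 1) (ck * e5 (A1 t) 0).
  by move=> t; apply: dEq (Hw 1%N t) _; rewrite {1}(v5E (A1 t)) jN'5 e51.
have Hw2 : forall t, DD t (fun s => e5 (A1 s) 2) (cj * e5 (A1 t) 4 - ck * e5 (A1 t) 3).
  by move=> t; apply: dEq (Hw 2%N t) _; rewrite {1}(v5E (A1 t)) jN'5 e52.
have Hw3 : forall t, DD t (fun s => e5 (A1 s) 3) (ck * e5 (A1 t) 2 - ci * e5 (A1 t) 4).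
  by move=> t; apply: dEq (Hw 3%N t) _; rewrite {1}(v5E (A1 t)) jN'5 e53.
have Hw4 : forall t, DD t (fun s => e5 (A1 s) 4) (ci * e5 (A1 t) 3 - cj * e5 (A1 t) 2).
  by move=> t; apply: dEq (Hw 4%N t) _; rewrite {1}(v5E (A1 t)) jN'5 e54.
have Hx : forall (k : nat) t, DD t (fun s => e5 (gv s) k) (e5 (A1 t) k).
  by move=> k t; exact: (C1_DD (inord k) t C1g).
have Hh : forall (k : nat) t, DD t (fun s => e3 (gz s) k)
    (e3 (v3 ci cj ck + 2^-1 *: brN' (gv t) (A1 t)) k).
  move=> k t; apply: dEq; first exact: (C1_DD (inord k) t C1z).
  by rewrite -(A2c t) /A2 /A1 /ltv /= subrK.
pose p1 := fun s => e5 (A1 s) 0.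
pose p2 := fun s => e5 (A1 s) 1.
pose r3 := fun s => (cj * e5 (A1 s) 2 - ci * e5 (A1 s) 3) / (ci ^+ 2 + cj ^+ 2).
pose r4 := fun s => (ck * ci * e5 (A1 s) 2 + ck * cj * e5 (A1 s) 3 - (ci ^+ 2 + cj ^+ 2) * e5 (A1 s) 4)
   / ((ci ^+ 2 + cj ^+ 2) * (ci ^+ 2 + cj ^+ 2 + ck ^+ 2)).
pose q := fun s => (ci * e5 (A1 s) 2 + cj * e5 (A1 s) 3 + ck * e5 (A1 s) 4) / (ci ^+ 2 + cj ^+ 2 + ck ^+ 2).
have Hp1 : forall t, DD t p1 (- ck * p2 t).
  move=> t; rewrite /p1; apply: dEq.
    by dtacH ltac:(first [apply: Hw0 | apply: Hw1 | apply: Hw2 | apply: Hw3 | apply: Hw4]).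
  by rewrite /p2; field.
have Hp2 : forall t, DD t p2 (ck * p1 t).
  move=> t; rewrite /p2; apply: dEq.
    by dtacH ltac:(first [apply: Hw0 | apply: Hw1 | apply: Hw2 | apply: Hw3 | apply: Hw4]).
  by rewrite /p1; field.
have Hr3 : forall t, DD t r3 (- (ci ^+ 2 + cj ^+ 2 + ck ^+ 2) * r4 t).
  move=> t; rewrite /r3; apply: dEq.
    by dtacH ltac:(first [apply: Hw0 | apply: Hw1 | apply: Hw2 | apply: Hw3 | apply: Hw4]).
  by rewrite /r4; field; rewrite s2n0 N2n0.
have Hr4 : forall t, DD t r4 (r3 t).
  move=> t; rewrite /r4; apply: dEq.
    by dtacH ltac:(first [apply: Hw0 | apply: Hw1 | apply: Hw2 | apply: Hw3 | apply: Hw4]).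
  by rewrite /r3; field; rewrite s2n0 N2n0.
have Hq : forall t, DD t q 0.
  move=> t; rewrite /q; apply: dEq.
    by dtacH ltac:(first [apply: Hw0 | apply: Hw1 | apply: Hw2 | apply: Hw3 | apply: Hw4]).
  by rewrite /=; field.

have Hqc : forall s, q s = q 0 by move=> s; apply: cst_of.
have HA1dec : forall s, A1 s = @mwck R p1 p2 s + @mwc R ci cj ck r3 r4 s + q 0 *: @mYZ R ci cj ck.
  move=> s; rewrite -(Hqc s) {1}(v5E (A1 s)) /mwck /mwc /mE1 /mE2 /mF3 /mE4 /mYZ /p1 /p2 /r3 /r4 /q.
  vnorm; congr v5; field; rewrite ?s2n0 ?N2n0 //.
have HA10 : A1 0 = V by rewrite /A1 HA0.
have HA1t : A1 tau = V by rewrite /A1 HAt.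
have Vexp : V = v5 a1 a2
    ((a3 * n) * cj + a4 * ck * ci + beta * ci) (- (a3 * n) * ci + a4 * ck * cj + beta * cj)
    (- a4 * (ci ^+ 2 + cj ^+ 2) + beta * ck).
  rewrite HV HVp HV0 /E1' /E2' /E3' /E4' /YZ -/n XiE XjE YiE YjE YkE; vnorm; congr v5; ring.

have P10 : p1 0 = a1 by rewrite /p1 HA10 Vexp; crush; field.
have P20 : p2 0 = a2 by rewrite /p2 HA10 Vexp; crush; field.
have R30 : r3 0 = a3 * n by rewrite /r3 HA10 Vexp; crush; field.
have R40 : r4 0 = a4 by rewrite /r4 HA10 Vexp; crush; field; rewrite ?s2n0 ?N2n0.
have Q0 : q 0 = beta by rewrite /q HA10 Vexp; crush; field.
have P1t : p1 tau = p1 0 by rewrite /p1 HA1t HA10.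
have P2t : p2 tau = p2 0 by rewrite /p2 HA1t HA10.
have R3t : r3 tau = r3 0 by rewrite /r3 HA1t HA10.
have R4t : r4 tau = r4 0 by rewrite /r4 HA1t HA10.
rewrite Q0 in HA1dec.
clearbody p1 p2 r3 r4 q A1 A2.
pose kap := gv 0 - @mKw R ci cj ck p1 p2 r3 r4 0.
have HG : forall s, gv s = kap + (s * beta) *: @mYZ R ci cj ck + @mKw R ci cj ck p1 p2 r3 r4 s.
{   suff : forall s, gv s - (s * beta) *: @mYZ R ci cj ck - @mKw R ci cj ck p1 p2 r3 r4 s =
     gv 0 - (0 * beta) *: @mYZ R ci cj ck - @mKw R ci cj ck p1 p2 r3 r4 0.
    move=> h s; move: (h s); rewrite mul0r scale0r subr0 -/kap => <-.
    by rewrite addrAC subrK subrK.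
  apply: vec5_cst => k t; case: k => [|[|[|[|[|k]]]]] // _.
  all: apply: dExt; first (move=> s; rewrite (v5E (gv s)) /mKw /mKwck /mKwc /mE1 /mE2 /mF3 /mE4 /mYZ;
       vnorm; crush; reflexivity).
  all: apply: dEq; first (dtacH ltac:(first [apply: Hp1 | apply: Hp2 | apply: Hr3 | apply: Hr4
       | apply: (Hx 0%N) | apply: (Hx 1%N) | apply: (Hx 2%N) | apply: (Hx 3%N) | apply: (Hx 4%N)])).
  all: rewrite HA1dec /mwck /mwc /mE1 /mE2 /mF3 /mE4 /mYZ; vnorm; crush.
  all: rewrite /=; field; rewrite ?s2n0 ?N2n0 //. }

have HGG : forall s, gz s - @mGG R ci cj ck beta (e5 kap 0) (e5 kap 1) (e5 kap 2) (e5 kap 3) (e5 kap 4) p1 p2 r3 r4 s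
   = gz 0 - @mGG R ci cj ck beta (e5 kap 0) (e5 kap 1) (e5 kap 2) (e5 kap 3) (e5 kap 4) p1 p2 r3 r4 0.
{ apply: vec3_cst => k t; case: k => [|[|[|k]]] // _.
  - apply: dExt; first by move=> s; rewrite e3B.
    apply: dEq; first by apply: dAdd; [exact: (Hh 0%N t) | apply: dOpp; exact: (@mGG_der0 R ci cj ck beta (e5 kap 0) (e5 kap 1) (e5 kap 2) (e5 kap 3) (e5 kap 4) p1 p2 r3 r4 s2n0 ck0 N2n0 Hp1 Hp2 Hr3 Hr4 t)].
    by rewrite (HG t) HA1dec {1}(v5E kap) /mZc subrr.
  - apply: dExt; first by move=> s; rewrite e3B.
    apply: dEq; first by apply: dAdd; [exact: (Hh 1%N t) | apply: dOpp; exact: (@mGG_der1 R ci cj ck beta (e5 kap 0) (e5 kap 1) (e5 kap 2) (e5 kap 3) (e5 kap 4) p1 p2 r3 r4 s2n0 ck0 N2n0 Hp1 Hp2 Hr3 Hr4 t)].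
    by rewrite (HG t) HA1dec {1}(v5E kap) /mZc subrr.
  - apply: dExt; first by move=> s; rewrite e3B.
    apply: dEq; first by apply: dAdd; [exact: (Hh 2%N t) | apply: dOpp; exact: (@mGG_der2 R ci cj ck beta (e5 kap 0) (e5 kap 1) (e5 kap 2) (e5 kap 3) (e5 kap 4) p1 p2 r3 r4 s2n0 ck0 N2n0 Hp1 Hp2 Hr3 Hr4 t)].
    by rewrite (HG t) HA1dec {1}(v5E kap) /mZc subrr. }

have ck2 : 0 < ck ^+ 2 by rewrite exprn_even_gt0 //= ck0.
have EVck' : jjM ci cj ck Vck = - (ck ^+ 2) *: Vck := EVck.
have EVc' : jjM ci cj ck Vc = - (n ^+ 2) *: Vc := EVc.
rewrite nN in EVc'.
have zF3 : dF3 ci cj Vck = 0.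
  apply: (@cancel_lin R (- (ci ^+ 2 + cj ^+ 2 + ck ^+ 2)) (- ck ^+ 2)).
    by rewrite -dF3jj EVck' dF3Z.
  by apply/eqP => e; lra.
have zE4 : dE4 ci cj ck Vck = 0.
  apply: (@cancel_lin R (- (ci ^+ 2 + cj ^+ 2 + ck ^+ 2)) (- ck ^+ 2)).
    by rewrite -dE4jj EVck' dE4Z.
  by apply/eqP => e; lra.
have zYZ : dYZ ci cj ck Vck = 0.
  apply: (@cancel_lin R 0 (- ck ^+ 2)).
    by rewrite mul0r -(dYZjj ci cj ck Vck) EVck' dYZZ.
  by apply/eqP => e; lra.
have zE1 : dE1 Vc = 0.
  apply: (@cancel_lin R (- ck ^+ 2) (- (ci ^+ 2 + cj ^+ 2 + ck ^+ 2))).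
    by rewrite -(dE1jj ci cj ck) EVc' dE1Z.
  by apply/eqP => e; lra.
have zE2 : dE2 Vc = 0.
  apply: (@cancel_lin R (- ck ^+ 2) (- (ci ^+ 2 + cj ^+ 2 + ck ^+ 2))).
    by rewrite -(dE2jj ci cj ck) EVc' dE2Z.
  by apply/eqP => e; lra.
have zYZc : dYZ ci cj ck Vc = 0.
  apply: (@cancel_lin R 0 (- (ci ^+ 2 + cj ^+ 2 + ck ^+ 2))).
    by rewrite mul0r -(dYZjj ci cj ck Vc) EVc' dYZZ.
  by apply/eqP => e; lra.
have HVpE : Vck + Vc = v5 a1 a2
    ((a3 * n) * cj + a4 * ck * ci) (- (a3 * n) * ci + a4 * ck * cj) (- a4 * (ci ^+ 2 + cj ^+ 2)).
  rewrite HVp /E1' /E2' /E3' /E4' -/n XiE XjE YiE YjE YkE; vnorm; congr v5; ring.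
have c1 : dE1 Vck = a1.
  have := congr1 (@dE1 R) HVpE; rewrite dE1D zE1 addr0 => ->; rewrite /dE1; crush; ring.
have c2 : dE2 Vck = a2.
  have := congr1 (@dE2 R) HVpE; rewrite dE2D zE2 addr0 => ->; rewrite /dE2; crush; ring.
have c3 : dF3 ci cj Vc = a3 * n * (ci ^+ 2 + cj ^+ 2).
  have := congr1 (dF3 ci cj) HVpE; rewrite dF3D zF3 add0r => ->; rewrite /dF3; crush; ring.
have c4 : dE4 ci cj ck Vc = a4 * ((ci ^+ 2 + cj ^+ 2) * (ci ^+ 2 + cj ^+ 2 + ck ^+ 2)).
  have := congr1 (dE4 ci cj ck) HVpE; rewrite dE4D zE4 add0r => ->; rewrite /dE4; crush; ring.
have Vck_a : Vck = a1 *: @mE1 R + a2 *: @mE2 R.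
  rewrite {1}(decM ci cj ck Vck s2n0 N2n0) zF3 zE4 zYZ c1 c2 !mul0r !scale0r !addr0 //.
have Vc_a : Vc = (a3 * n) *: @mF3 R ci cj + a4 *: @mE4 R ci cj ck.
  rewrite {1}(decM ci cj ck Vc s2n0 N2n0) zE1 zE2 zYZc c3 c4 !mul0r !scale0r !add0r addr0 !mulfK //.
  by rewrite mulf_neq0.
have n_gt0 : 0 < n by apply: lt_trans Hck Hlt.
have nz1 : a1 ^+ 2 + a2 ^+ 2 != 0.
  apply: contraNneq nVck => h.
  have ha1 : a1 = 0 by nra.
  have ha2 : a2 = 0 by nra.
  by rewrite Vck_a ha1 ha2 !scale0r addr0.
have nz2 : (a3 * n) ^+ 2 + (n * a4) ^+ 2 != 0.
  apply: contraNneq nVc => h.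
  have ha3 : a3 * n = 0 by nra.
  have ha4 : n * a4 = 0 by nra.
  have ha4' : a4 = 0 by move/eqP: ha4; rewrite mulf_eq0 gt_eqF //= => /eqP.
  by rewrite Vc_a ha3 ha4' !scale0r addr0.
have cck : cos (ck * tau) = 1.
  by apply: (@rot_period R p1 p2 ck tau Hp1 Hp2 P1t P2t); rewrite P10 P20.
have ccn : cos (n * tau) = 1.
  apply: (@rot_period R r3 (fun s => n * r4 s) n tau).
  - by move=> t; apply: dEq (Hr3 t) _; rewrite -nN; ring.
  - move=> t; apply: dEq; first by apply: dMul; [apply: dCst | apply: Hr4].
    by rewrite /=; ring.
  - exact: R3t.
  - by rewrite R4t.
  - by rewrite R30 R40.
split.
- by have [m hm] := @cos1_int R _ cck; exists m; rewrite mulrC.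
- by have [m hm] := @cos1_int R _ ccn; exists m; rewrite mulrC.
have Hgzt : gz tau = gz 0 - @mGG R ci cj ck beta (e5 kap 0) (e5 kap 1) (e5 kap 2) (e5 kap 3) (e5 kap 4) p1 p2 r3 r4 0
   + @mGG R ci cj ck beta (e5 kap 0) (e5 kap 1) (e5 kap 2) (e5 kap 3) (e5 kap 4) p1 p2 r3 r4 tau.
  by rewrite -(HGG tau) subrK.
rewrite /gmul /ginv /= Hgzt (HG tau) /kap.
case: Hinit => -> ->.
rewrite (v3E z).
rewrite /mGG /mPhi /mjwc /mjwck /mK2w /mKw /mKwc /mKwck /mwc /mwck P1t P2t R3t R4t P10 P20 R30 R40.
rewrite Vck_a Vc_a HV0 Hv /YZ /mE1 /mE2 /mF3 /mE4 /mYZ /mZc XiE XjE YiE YjE YkE ZiE ZjE ZkE.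
vnorm; rewrite !dot5; vnorm; crush.
rewrite nN.
rewrite ?mulNr [n * a3]mulrC.
move: (a3 * n) => b3.
congr pair; [congr v5 | congr v3]; field; rewrite ?s2n0 ?N2n0 ?ck0 //.
Qed.

Theorem lemma5p4 (R : realType) :
  (* case of N *)
  (forall (ci cj ck : R) (V Vck Vc V0 : 'rV[R]_5)
     (gv : R -> 'rV[R]_5) (gz : R -> 'rV[R]_3) (z : 'rV[R]_3) (v : 'rV[R]_5)
     (tau beta a1 a2 a3 a4 xi xj yi yj yk : R),
   `|ck| < cnorm ci cj ck -> 0 < `|ck| ->
   V = Vck + Vc + V0 ->
   eigcomp brN (Zc ci cj ck) ck Vck -> eigcomp brN (Zc ci cj ck) (cnorm ci cj ck) Vc ->
   eigcomp brN (Zc ci cj ck) 0 V0 ->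
   Vck != 0 -> Vc != 0 -> V0 != 0 ->
   geodesic brN gv gz ->
   (gv 0, gz 0) = (v, z) -> ltv brN gv gz 0 = (V, Zc ci cj ck) ->
   0 < tau -> ltv brN gv gz tau = (V, Zc ci cj ck) ->
   V0 = beta *: YZ ci cj ck ->
   Vck + Vc = a1 *: E1 ci cj ck + a2 *: E2 ci cj ck + a3 *: E3 ci cj ck + a4 *: E4 ci cj ck ->
   v = xi *: Xi + xj *: Xj + yi *: Yi + yj *: Yj + yk *: Yk ->
   [/\ exists n : int, tau * ck = 2 * pi * n%:~R,
       exists n : int, tau * cnorm ci cj ck = 2 * pi * n%:~R &
       gmul brN (gv tau, gz tau) (ginv (gv 0, gz 0)) =
       (tau *: V0,
        (tau * (1 + dot (Vck + Vc) (Vck + Vc) / (2 * cnorm ci cj ck ^+ 2))) *: Zc ci cj ck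
        + (tau * beta * (a2 - ck / (ci ^+ 2 + cj ^+ 2) * (xi * ci + xj * cj)))
            *: (- cj *: Zi + ci *: Zj)
        + (tau * (- (dot Vck Vck) / (2 * ck * cnorm ci cj ck ^+ 2)
                  + beta * (a4 - 1 / (ci ^+ 2 + cj ^+ 2) * (xi * cj - xj * ci))))
            *: (ck *: (ci *: Zi + cj *: Zj) - (ci ^+ 2 + cj ^+ 2) *: Zk))])
  /\
  (* case of N' *)
  (forall (ci cj ck : R) (V Vck Vc V0 : 'rV[R]_5)
     (gv : R -> 'rV[R]_5) (gz : R -> 'rV[R]_3) (z : 'rV[R]_3) (v : 'rV[R]_5)
     (tau beta a1 a2 a3 a4 xi xj yi yj yk : R),
   `|ck| < cnorm ci cj ck -> 0 < `|ck| ->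
   V = Vck + Vc + V0 ->
   eigcomp brN' (Zc ci cj ck) ck Vck -> eigcomp brN' (Zc ci cj ck) (cnorm ci cj ck) Vc ->
   eigcomp brN' (Zc ci cj ck) 0 V0 ->
   Vck != 0 -> Vc != 0 -> V0 != 0 ->
   geodesic brN' gv gz ->
   (gv 0, gz 0) = (v, z) -> ltv brN' gv gz 0 = (V, Zc ci cj ck) ->
   0 < tau -> ltv brN' gv gz tau = (V, Zc ci cj ck) ->
   V0 = beta *: YZ ci cj ck ->
   Vck + Vc = a1 *: E1' ci cj ck + a2 *: E2' ci cj ck + a3 *: E3' ci cj ck + a4 *: E4' ci cj ck ->
   v = xi *: Xi + xj *: Xj + yi *: Yi + yj *: Yj + yk *: Yk ->
   [/\ exists n : int, tau * ck = 2 * pi * n%:~R,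
       exists n : int, tau * cnorm ci cj ck = 2 * pi * n%:~R &
       gmul brN' (gv tau, gz tau) (ginv (gv 0, gz 0)) =
       (tau *: V0,
        (tau * (1 + dot (Vck + Vc) (Vck + Vc) / (2 * cnorm ci cj ck ^+ 2))) *: Zc ci cj ck
        + (tau * beta * (- cnorm ci cj ck * a3 + yk
                         - ck / (ci ^+ 2 + cj ^+ 2) * (yi * ci + yj * cj)))
            *: (- cj *: Zi + ci *: Zj)
        + (tau * (- (dot Vck Vck) / (2 * ck * cnorm ci cj ck ^+ 2)
                  + beta * (a4 - 1 / (ci ^+ 2 + cj ^+ 2) * (yi * cj - yj * ci))))
            *: (ck *: (ci *: Zi + cj *: Zj) - (ci ^+ 2 + cj ^+ 2) *: Zk))]).
Proof. split; [exact: caseN | exact: caseM]. Qed.
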